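(* Let $\Gamma$, $\varphi$, $\Xi$, $(\cdot)^\flat$ and $\mathscr{M}$ be as in the context. For every base $\mathscr{B}\supseteq\mathscr{M}$ and finite multiset of atoms $S$: (1) if $\sigma\multimap\tau\in\Xi$, then $S\vdash_{\mathscr{B}}(\sigma\multimap\tau)^\flat$ iff $S,\sigma^\flat\vdash_{\mathscr{B}}\tau^\flat$; (2) if $\sigma\otimes\tau\in\Xi$, then $S\vdash_{\mathscr{B}}(\sigma\otimes\tau)^\flat$ iff for every $\mathscr{Y}\supseteq\mathscr{B}$, finite multiset of atoms $V$ and atom $p$, if $V,\sigma^\flat,\tau^\flat\vdash_{\mathscr{Y}}p$ then $S,V\vdash_{\mathscr{Y}}p$; (3) if $\mathrm{I}\in\Xi$, then $S\vdash_{\mathscr{B}}\mathrm{I}^\flat$ iff for every $\mathscr{Y}\supseteq\mathscr{B}$, $V$ and atom $p$, if $V\vdash_{\mathscr{Y}}p$ then $S,V\vdash_{\mathscr{Y}}p$.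
   Context: Fix a countably infinite set $\mathbb{A}$ of atoms. IMLL formulas: $\varphi::= p\in\mathbb{A}\mid\varphi\otimes\varphi\mid \mathrm{I}\mid\varphi\multimap\varphi$; multisets are finite, ''$,$'' is multiset union. An atomic rule is $(P_1\triangleright p_1,\dots,P_n\triangleright p_n)\Rightarrow p$ ($n\ge0$, $P_i$ finite multisets of atoms, $\triangleright p$ abbreviating $\emptyset\triangleright p$); a base is a set of atomic rules. Derivability $\vdash_{\mathscr{B}}$ is the least relation with (Ref) $[p]\vdash_{\mathscr{B}}p$; (App) if $(P_1\triangleright p_1,\dots,P_n\triangleright p_n)\Rightarrow p\in\mathscr{B}$ and $S_i,P_i\vdash_{\mathscr{B}}p_i$ for all $i$, then $S_1,\dots,S_n\vdash_{\mathscr{B}}p$. Fix a finite multiset $\Gamma$ and formula $\varphi$; let $\Xi$ be the set of all subformulas of formulas in $\Gamma$ and of $\varphi$. Let $(\cdot)^\flat:\Xi\to\mathbb{A}$ be an injection with $p^\flat=p$ for atoms $p\in\Xi$ and such that, for non-atomic $\xi$, $\xi^\flat$ is an atom not occurring in $\Xi$. The base $\mathscr{M}$ consists of the rules: for each $\sigma\multimap\tau\in\Xi$, $(\sigma^\flat\triangleright\tau^\flat)\Rightarrow(\sigma\multimap\tau)^\flat$ and $(\triangleright(\sigma\multimap\tau)^\flat,\triangleright\sigma^\flat)\Rightarrow\tau^\flat$; for each $\sigma\otimes\tau\in\Xi$, $(\triangleright\sigma^\flat,\triangleright\tau^\flat)\Rightarrow(\sigma\otimes\tau)^\flat$ and,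 for every atom $p$, $(\triangleright(\sigma\otimes\tau)^\flat,\ \sigma^\flat,\tau^\flat\triangleright p)\Rightarrow p$; if $\mathrm{I}\in\Xi$, the rule $\Rightarrow\mathrm{I}^\flat$ and, for every atom $p$, $(\triangleright\mathrm{I}^\flat,\triangleright p)\Rightarrow p$. *)

(* Defs.v *)
(* MathComp (boot) world: finite multisets of atoms are represented by
   sequences; derivability is closed under permutation (perm_eq) by
   construction, so it only depends on the underlying multisets. *)
From mathcomp Require Import all_boot.
Set Implicit Arguments. Unset Strict Implicit. Unset Printing Implicit Defensive.

Definition atom := nat.

Inductive formula : Type :=
| Atom of atom
| Tensor of formula & formula
| One
| Lolli of formula & formula.

Definition amset := seq atom.

(* An atomic rule (P_1 |> p_1, ..., P_n |> p_n) => p. *)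
Definition rule := (seq (amset * atom) * atom)%type.

Definition base := rule -> Prop.

Definition subbase (B C : base) : Prop := forall r, B r -> C r.

(* Derivability S |-_B p : least relation closed under (Ref) and (App);
   the context of (App) is S_1,...,S_n up to multiset equality. *)
Inductive deriv (B : base) : amset -> atom -> Prop :=
| deriv_Ref p : deriv B [:: p] p
| deriv_App (prem : seq (amset * atom)) (p : atom) (Ss : seq amset) (S : amset) :
    B (prem, p) ->
    size Ss = size prem ->
    (forall i, i < size prem ->
       deriv B (nth [::] Ss i ++ (nth ([::], 0) prem i).1) (nth ([::], 0) prem i).2) ->
    perm_eq S (flatten Ss) ->
    deriv B S p.

(* Membership in a list (formulas need not be an eqType). *)
Fixpoint inlist (x : formula) (l : seq formula) : Prop :=
  if l is y :: l' then y = x \/ inlist x l' else False.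

Inductive subform : formula -> formula -> Prop :=
| sub_refl f : subform f f
| sub_tensorl f a b : subform f a -> subform f (Tensor a b)
| sub_tensorr f a b : subform f b -> subform f (Tensor a b)
| sub_lollil f a b : subform f a -> subform f (Lolli a b)
| sub_lollir f a b : subform f b -> subform f (Lolli a b).

Definition inXi (Gamma : seq formula) (phi xi : formula) : Prop :=
  exists psi, (inlist psi Gamma \/ psi = phi) /\ subform xi psi.

Definition is_atomic (f : formula) : Prop :=
  match f with Atom _ => True | _ => False end.

Definition flat_ok (Gamma : seq formula) (phi : formula) (flat : formula -> atom) : Prop :=
  (forall x y, inXi Gamma phi x -> inXi Gamma phi y -> flat x = flat y -> x = y) /\
  (forall p, inXi Gamma phi (Atom p) -> flat (Atom p) = p) /\
  (forall x, inXi Gamma phi x -> ~ is_atomic x -> ~ inXi Gamma phi (Atom (flat x))).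

Definition Mbase (Gamma : seq formula) (phi : formula) (flat : formula -> atom) : base :=
  fun r =>
    (exists s t, inXi Gamma phi (Lolli s t) /\
       (r = ([:: ([:: flat s], flat t)], flat (Lolli s t)) \/
        r = ([:: ([::], flat (Lolli s t)); ([::], flat s)], flat t)))
    \/
    (exists s t, inXi Gamma phi (Tensor s t) /\
       (r = ([:: ([::], flat s); ([::], flat t)], flat (Tensor s t)) \/
        exists p : atom,
          r = ([:: ([::], flat (Tensor s t)); ([:: flat s; flat t], p)], p)))
    \/
    (inXi Gamma phi One /\
       (r = ([::], flat One) \/
        exists p : atom, r = ([:: ([::], flat One); ([::], p)], p))).

(* Main.v *)
Require Import Defs.
From mathcomp Require Import all_boot.

Lemma deriv_mono (B C : base) : subbase B C -> forall S p, deriv B S p -> deriv C S p.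
Proof.
move=> BC S p; elim=> [q|prem q Ss S' HB Hsz _ IH Hp].
  exact: deriv_Ref.
exact: (deriv_App (BC _ HB) Hsz IH Hp).
Qed.



Lemma app2 (B : base) P1 p1 P2 p2 q S1 S2 S :
  B ([:: (P1, p1); (P2, p2)], q) ->
  deriv B (S1 ++ P1) p1 -> deriv B (S2 ++ P2) p2 ->
  perm_eq S (S1 ++ S2) -> deriv B S q.
Proof.
move=> HB H1 H2 Hp.
apply: (@deriv_App B _ q [:: S1; S2] S HB) => //.
  by case=> [|[|i]] //= _.
by rewrite /= cats0.
Qed.

Theorem mainTheorem13 (Gamma : seq formula) (phi : formula) (flat : formula -> atom) :
  flat_ok Gamma phi flat ->
  forall (B : base), subbase (Mbase Gamma phi flat) B ->
  forall (S : amset),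
    (forall s t, inXi Gamma phi (Lolli s t) ->
       (deriv B S (flat (Lolli s t)) <-> deriv B (S ++ [:: flat s]) (flat t))) /\
    (forall s t, inXi Gamma phi (Tensor s t) ->
       (deriv B S (flat (Tensor s t)) <->
        (forall (Y : base) (V : amset) (p : atom), subbase B Y ->
           deriv Y (V ++ [:: flat s; flat t]) p -> deriv Y (S ++ V) p))) /\
    (inXi Gamma phi One ->
       (deriv B S (flat One) <->
        (forall (Y : base) (V : amset) (p : atom), subbase B Y ->
           deriv Y V p -> deriv Y (S ++ V) p))).
Proof.
move=> _ B MB S; split; [|split].
- move=> s t Hx; split=> H.
    apply: (@app2 B [::] (flat (Lolli s t)) [::] (flat s) (flat t) S [:: flat s]).
    + apply: MB; left; exists s, t; split=> //; by right.
    + by rewrite cats0.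
    + exact: deriv_Ref.
    + by [].
  apply: (@deriv_App B [:: ([:: flat s], flat t)] _ [:: S] S).
  + apply: MB; left; exists s, t; split=> //; by left.
  + by [].
  + by case=> [|i] //= _.
  + by rewrite /= cats0.
- move=> s t Hx; split=> H.
    move=> Y V p BY HV.
    apply: (@app2 Y [::] (flat (Tensor s t)) [:: flat s; flat t] p p S V).
    + apply: BY; apply: MB; right; left; exists s, t; split=> //; right; by exists p.
    + rewrite cats0. exact: (@deriv_mono B Y BY _ _ H).
    + exact: HV.
    + by [].
  have := H B [::] (flat (Tensor s t)) (fun r h => h).
  rewrite cats0; apply.
  apply: (@app2 B [::] (flat s) [::] (flat t) _ [:: flat s] [:: flat t]).
  + apply: MB; right; left; exists s, t; split=> //; by left.
  + exact: deriv_Ref.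
  + exact: deriv_Ref.
  + by [].
- move=> Hx; split=> H.
    move=> Y V p BY HV.
    apply: (@app2 Y [::] (flat One) [::] p p S V).
    + apply: BY; apply: MB; right; right; split=> //; right; by exists p.
    + by rewrite cats0; exact: (@deriv_mono B Y BY _ _ H).
    + by rewrite cats0.
    + by [].
  have := H B [::] (flat One) (fun r h => h).
  rewrite cats0; apply.
  apply: (@deriv_App B [::] _ [::] [::]) => //.
  apply: MB; right; right; split=> //; by left.
Qed.
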